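(* Let $(Q,P)$ be a weakly quasi-lattice ordered group and let $\Lambda$ be a $P$-graph with $\mathrm{FA}(\Lambda)\neq\emptyset$. Then the path groupoid $\mathcal{G}(\Lambda)$ and the boundary-path groupoid $\partial\mathcal{G}(\Lambda)$ are ample, second-countable and Hausdorff.
   Context: $(Q,P)$ weakly quasi-lattice ordered: $Q$ a discrete group, $P\subseteq Q$ a subsemigroup containing the identity $e$ with $P\cap P^{-1}=\{e\}$, and, with $p\le r$ meaning $pq=r$ for some $q\in P$, any two elements of $P$ with a common upper bound have a least common upper bound. A $P$-graph is a countable small category $\Lambda$ (identities $\Lambda^{(0)}$, range/source $r,s$) with a functor $d:\Lambda\to P$ with unique factorisation (if $d(\lambda)=pq$ then there are unique $\mu,\nu$ with $\lambda=\mu\nu$, $d(\mu)=p$, $d(\nu)=q$). Write $\Lambda^m=d^{-1}(m)$, $\lambda\Lambda=\{\lambda\mu: s(\lambda)=r(\mu)\}$, $\mu\preceq\lambda$ iff $\lambda\in\mu\Lambda$. $\mathrm{FA}(\Lambda)$ is the set of $\lambda$ such that for all $\mu\in\lambda\Lambda,\nu\in\Lambda$ there is finite $J\subseteq\Lambda$ with $\mu\Lambda\cap\nu\Lambda=\bigcup_{\kappa\in J}\kappa\Lambda$. A filter is a nonempty hereditary and directed subset of $\Lambda$ (w.r.t. $\preceq$); $\mathcal{F}(\Lambda)$ the filters, $\mathcal{U}(\Lambda)$ the maximal filters. $\mathcal{P}(\Lambda)$ has the product topology from $\{0,1\}^\Lambda$; subsets have subspace topology. Path space $\mathcal{X}(\Lambda)=\{x\in\mathcal{F}(\Lambda):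 x\cap\mathrm{FA}(\Lambda)\neq\emptyset\}$; boundary-path space $\partial\mathcal{X}(\Lambda)$ = closure of $\mathcal{U}(\Lambda)\cap\mathcal{X}(\Lambda)$ in $\mathcal{X}(\Lambda)$. For $x\in\mathcal{X}(\Lambda)$ and $m\in P$ with $x\cap\Lambda^m\neq\emptyset$ (write $x\in\mathrm{dom}(m)$), let $x(0,m)$ be the unique element of $x\cap\Lambda^m$ and $x\cdot m=\{\mu: x(0,m)\mu\in x\}\in\mathcal{X}(\Lambda)$. The path groupoid $\mathcal{G}(\Lambda)$ is the set of $(x,q,y)\in\mathcal{X}(\Lambda)\times Q\times\mathcal{X}(\Lambda)$ for which there are $m,n\in P$ with $q=mn^{-1}$, $x\in\mathrm{dom}(m)$, $y\in\mathrm{dom}(n)$, $x\cdot m=y\cdot n$; composable pairs are $((x,q,y),(y,r,z))$ with product $(x,qr,z)$, inverse $(x,q,y)^{-1}=(y,q^{-1},x)$; its topology has basis the sets $\{(x,mn^{-1},y)\in\mathcal{G}(\Lambda): x\in U, y\in V, x\cdot m=y\cdot n\}$ for $m,n\in P$ and $U,V\subseteq\mathcal{X}(\Lambda)$ open. The unit space is identified with $\mathcal{X}(\Lambda)$ via $x\mapsto(x,e,x)$. The boundary-path groupoid $\partial\mathcal{G}(\Lambda)$ is the reduction $\{g\in\mathcal{G}(\Lambda): r(g),s(g)\in\partial\mathcal{X}(\Lambda)\}$ with the subspace topology. A topological groupoid is étale if it is locally compact with locally compact Hausdorff unit space and the source map is a local homeomorphism; ample if moreover the unit space has a basis of compact open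 sets. *)

(* Defs.v *)
From HB Require Import structures.
From mathcomp Require Import all_boot monoid.
From mathcomp Require Import boolp classical_sets cardinality.

Set Implicit Arguments.
Unset Strict Implicit.
Unset Printing Implicit Defensive.

Local Open Scope classical_set_scope.
Local Open Scope group_scope.

Definition qle (Q : groupType) (P : set Q) (p r : Q) : Prop :=
  exists q, P q /\ p * q = r.

Definition wqlo (Q : groupType) (P : set Q) : Prop :=
  [/\ P 1,
      (forall p q, P p -> P q -> P (p * q)),
      (forall p, P p -> P p^-1 -> p = 1) &
      (forall p q, P p -> P q ->
         (exists r, P r /\ qle P p r /\ qle P q r) ->
         exists r, [/\ P r, qle P p r, qle P q r &
                    forall r', P r' -> qle P p r' -> qle P q r' -> qle P r r'])].

Record category := Category {
  mor : Type;
  obj : Type;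
  src : mor -> obj;
  rng : mor -> obj;
  idm : obj -> mor;
  comp : mor -> mor -> mor;   (* comp a b = ab, defined when src a = rng b *)
  src_idm : forall v, src (idm v) = v;
  rng_idm : forall v, rng (idm v) = v;
  src_comp : forall a b, src a = rng b -> src (comp a b) = src b;
  rng_comp : forall a b, src a = rng b -> rng (comp a b) = rng a;
  comp_idl : forall a, comp (idm (rng a)) a = a;
  comp_idr : forall a, comp a (idm (src a)) = a;
  comp_assoc : forall a b c, src a = rng b -> src b = rng c ->
                 comp a (comp b c) = comp (comp a b) c
}.

Definition is_Pgraph (Q : groupType) (P : set Q) (C : category)
    (d : mor C -> Q) : Prop :=
  [/\ countable [set: mor C],
      (forall l, P (d l)),
      (forall v, d (idm v) = 1),
      (forall a b, src a = rng b -> d (comp a b) = d a * d b) &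
      (forall l p q, P p -> P q -> d l = p * q ->
         exists! mn : mor C * mor C,
           [/\ src mn.1 = rng mn.2, l = comp mn.1 mn.2, d mn.1 = p & d mn.2 = q])].

Section PGraph.
Variables (Q : groupType) (P : set Q) (C : category) (d : mor C -> Q).
Local Notation Lam := (mor C).

Definition ext (l : Lam) : set Lam :=
  [set m | exists n, src l = rng n /\ m = comp l n].

Definition prec (m l : Lam) : Prop := ext m l.

Definition FA : set Lam :=
  [set l | forall m n, ext l m ->
     exists J : set Lam, finite_set J /\
       ext m `&` ext n = \bigcup_(k in J) ext k].

Definition is_filter (x : set Lam) : Prop :=
  [/\ x !=set0,
      (forall m l, prec m l -> x l -> x m) &
      (forall l m, x l -> x m -> exists n, [/\ x n, prec l n & prec m n])].

Definition maximal_filter (x : set Lam) : Prop :=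
  is_filter x /\ forall y, is_filter y -> x `<=` y -> y = x.

(* product topology on P(Lambda) = {0,1}^Lambda: basic open sets *)
Definition cyl (F G : set Lam) : set (set Lam) :=
  [set x | F `<=` x /\ G `&` x = set0].

Definition pow_open (U : set (set Lam)) : Prop :=
  forall x, U x -> exists F G, [/\ finite_set F, finite_set G, cyl F G x &
                                 cyl F G `<=` U].

End PGraph.

(* Generic topology on subsets: a space is a carrier A : set T together with *)
(* a family O of open sets (subsets of A).                                   *)
Section Topology.
Variables (T : Type).

Definition subspace_opens (O : set (set T)) (A : set T) : set (set T) :=
  [set V | exists U, O U /\ V = U `&` A].

Definition closure_in (A : set T) (O : set (set T)) (S : set T) : set T :=
  [set x | A x /\ forall U, O U -> U x -> U `&` S !=set0].

Definition is_hausdorff (A : set T) (O : set (set T)) : Prop :=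
  forall x y, A x -> A y -> x <> y ->
    exists U V, [/\ O U, O V, U x, V y & U `&` V = set0].

Definition is_compact (A : set T) (O : set (set T)) (K : set T) : Prop :=
  K `<=` A /\
  forall Cv : set (set T), Cv `<=` O -> K `<=` \bigcup_(U in Cv) U ->
    exists D, [/\ finite_set D, D `<=` Cv & K `<=` \bigcup_(U in D) U].

Definition locally_compact (A : set T) (O : set (set T)) : Prop :=
  forall x, A x -> exists U K, [/\ O U, U x, U `<=` K & is_compact A O K].

Definition second_countable (A : set T) (O : set (set T)) : Prop :=
  exists B : set (set T), [/\ countable B, B `<=` O &
     forall U x, O U -> U x -> exists V, [/\ B V, V x & V `<=` U]].

Definition compact_open_basis (A : set T) (O : set (set T)) : Prop :=
  forall U x, O U -> U x -> exists K, [/\ O K, is_compact A O K, K x & K `<=` U].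

End Topology.

Section Maps.
Variables (T U : Type).

Definition continuous_on (A : set T) (OA : set (set T)) (B : set U)
    (OB : set (set U)) (f : T -> U) : Prop :=
  (forall x, A x -> B (f x)) /\ forall V, OB V -> OA (A `&` f @^-1` V).

Definition local_homeo (A : set T) (OA : set (set T)) (B : set U)
    (OB : set (set U)) (f : T -> U) : Prop :=
  (forall x, A x -> B (f x)) /\
  forall x, A x -> exists W, [/\ OA W, W x, OB (f @` W),
    (forall y z, W y -> W z -> f y = f z -> y = z) &
    ((forall V, OA V -> V `<=` W -> OB (f @` V)) /\
     (forall V, OB V -> OA (W `&` f @^-1` V)))].

End Maps.

Section Groupoids.
Variables (Tg Tu : Type).
Variables (G : set Tg) (OG : set (set Tg)) (X : set Tu) (OX : set (set Tu)).
Variables (s r : Tg -> Tu) (mul : Tg -> Tg -> Tg) (inv : Tg -> Tg).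

Definition topological_groupoid : Prop :=
  continuous_on G OG G OG inv /\
  forall g h, G g -> G h -> s g = r h -> forall W, OG W -> W (mul g h) ->
    exists U V, [/\ OG U, OG V, U g, V h &
      forall g' h', U g' -> V h' -> G g' -> G h' -> s g' = r h' -> W (mul g' h')].

Definition etale : Prop :=
  [/\ topological_groupoid, locally_compact G OG, locally_compact X OX,
      is_hausdorff X OX & local_homeo G OG X OX s].

Definition ample : Prop := etale /\ compact_open_basis X OX.

End Groupoids.

Section PathGroupoid.
Variables (Q : groupType) (P : set Q) (C : category) (d : mor C -> Q).
Local Notation Lam := (mor C).
Local Notation pt := (set Lam).
Local Notation arrow := (pt * Q * pt)%type.

Definition path_space : set pt :=
  [set x | is_filter x /\ x `&` @FA C !=set0].

Definition path_opens : set (set pt) :=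
  subspace_opens (@pow_open C) path_space.

Definition bpath_space : set pt :=
  closure_in path_space path_opens (@maximal_filter C `&` path_space).

Definition bpath_opens : set (set pt) :=
  subspace_opens path_opens bpath_space.

Definition pdom (m : Q) (x : pt) : Prop := exists l, x l /\ d l = m.

(* x . m = { mu | x(0,m) mu in x } ; x(0,m) is the (unique) element of
   x with degree m *)
Definition shift (m : Q) (x : pt) : pt :=
  [set mu | exists l, [/\ x l, d l = m, src l = rng mu & x (comp l mu)]].

Definition path_groupoid : set arrow :=
  [set g | [/\ path_space g.1.1, path_space g.2 &
    exists m n, [/\ P m /\ P n, g.1.2 = m * n^-1, pdom m g.1.1, pdom n g.2 &
                   shift m g.1.1 = shift n g.2]]].

Definition gbasic (m n : Q) (U V : set pt) : set arrow :=
  [set g | [/\ path_groupoid g, g.1.2 = m * n^-1, U g.1.1, V g.2 &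
              [/\ pdom m g.1.1, pdom n g.2 & shift m g.1.1 = shift n g.2]]].

Definition groupoid_opens : set (set arrow) :=
  [set W | W `<=` path_groupoid /\
     forall g, W g -> exists m n U V,
       [/\ P m /\ P n, path_opens U, path_opens V, gbasic m n U V g &
           gbasic m n U V `<=` W]].

Definition bpath_groupoid : set arrow :=
  [set g | [/\ path_groupoid g, bpath_space g.1.1 & bpath_space g.2]].

Definition bgroupoid_opens : set (set arrow) :=
  subspace_opens groupoid_opens bpath_groupoid.

Definition gsrc (g : arrow) : pt := g.2.
Definition grng (g : arrow) : pt := g.1.1.
Definition gmul (g h : arrow) : arrow := (g.1.1, g.1.2 * h.1.2, h.2).
Definition ginv (g : arrow) : arrow := (g.2, g.1.2^-1, g.1.1).

End PathGroupoid.

(* Main.v *)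
Require Import Defs.
From HB Require Import structures.
From mathcomp Require Import all_boot monoid.
From mathcomp Require Import boolp classical_sets cardinality.
Local Open Scope classical_set_scope.
Import Defs.
Set Implicit Arguments. Unset Strict Implicit. Unset Printing Implicit Defensive.


Section Basic.
Variables (Q : groupType) (P : set Q) (C : category) (d : mor C -> Q).
Hypothesis HG : is_Pgraph P d.
Local Notation Lam := (mor C).
Local Open Scope group_scope.
Implicit Types (a b c l m n nu mu : Lam) (x y w : set Lam).

Lemma dP l : P (d l). Proof. by case: HG. Qed.
Lemma d_comp a b : src a = rng b -> d (comp a b) = d a * d b.
Proof. by case: HG => _ _ _ H _; apply: H. Qed.

Lemma fact_uniq a1 b1 a2 b2 : src a1 = rng b1 -> src a2 = rng b2 ->
  comp a1 b1 = comp a2 b2 -> d a1 = d a2 -> a1 = a2 /\ b1 = b2.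
Proof.
move=> s1 s2 e da.
have db : d b1 = d b2.
  by apply: (@mulgI _ (d a1)); rewrite -d_comp // e d_comp // da.
case: HG => _ _ _ _ /(_ (comp a1 b1) (d a1) (d b1) (dP _) (dP _) (d_comp s1)).
move=> [[m1 m2] [_ U]].
have E1 := U (a1, b1) (And4 s1 erefl erefl erefl).
have E2 := U (a2, b2) (And4 s2 e (esym da) (esym db)).
by rewrite E1 in E2; case: E2.
Qed.

Lemma cancel_l l a b : src l = rng a -> src l = rng b -> comp l a = comp l b -> a = b.
Proof. by move=> ha hb e; case: (fact_uniq ha hb e erefl). Qed.

Lemma prec_refl l : prec l l.
Proof. by exists (idm (src l)); rewrite rng_idm comp_idr. Qed.

Lemma prec_trans a b c : prec a b -> prec b c -> prec a c.
Proof.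
move=> [n1 [h1 ->]] [n2 [h2 ->]].
rewrite src_comp // in h2.
exists (comp n1 n2); split; first by rewrite rng_comp.
by rewrite comp_assoc.
Qed.

Lemma prec_comp l n : src l = rng n -> prec l (comp l n).
Proof. by move=> h; exists n. Qed.

Lemma filter_uniq x l1 l2 : is_filter x -> x l1 -> x l2 -> d l1 = d l2 -> l1 = l2.
Proof.
move=> [_ _ dir] x1 x2 e.
have [n [_ [a1 [h1 E1]] [a2 [h2 E2]]]] := dir _ _ x1 x2.
by case: (fact_uniq h1 h2 (etrans (esym E1) E2) e).
Qed.

Lemma filter_her x m l : is_filter x -> x l -> prec m l -> x m.
Proof. by move=> [_ H _] xl pm; apply: H xl. Qed.

Lemma filter_dir x l m : is_filter x -> x l -> x m ->
  exists n, [/\ x n, prec l n & prec m n].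
Proof. by move=> [_ _ H]; apply: H. Qed.

Definition arrow_at (l l' : Lam) (x y : set Lam) :=
  [/\ x l, y l', src l = src l' &
      forall nu, rng nu = src l -> (x (comp l nu) <-> y (comp l' nu))].

Lemma shift_mem x l (m : Q) nu : is_filter x -> x l -> d l = m ->
  (shift d m x nu <-> src l = rng nu /\ x (comp l nu)).
Proof.
move=> fx xl dl; split.
  move=> [l0 [x0 d0 s0 c0]].
  by have e := filter_uniq fx x0 xl (etrans d0 (esym dl)); subst l0.
by move=> [h1 h2]; exists l.
Qed.

Lemma shift_arrow x y l l' : is_filter x -> is_filter y -> x l -> y l' ->
  (shift d (d l) x = shift d (d l') y <-> arrow_at l l' x y).
Proof.
move=> fx fy xl yl; split.
  move=> E.
  have hs : src l = src l'.
    have : shift d (d l) x (idm (src l)).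
      by apply/(shift_mem _ fx xl erefl); rewrite rng_idm comp_idr.
    rewrite E => /(shift_mem _ fy yl erefl) [-> _]; by rewrite rng_idm.
  split => // nu hnu; split.
    move=> h; have : shift d (d l) x nu by apply/(shift_mem _ fx xl erefl).
    by rewrite E => /(shift_mem _ fy yl erefl) [].
  move=> h; have : shift d (d l') y nu by apply/(shift_mem _ fy yl erefl); split => //; rewrite hnu hs.
  by rewrite -E => /(shift_mem _ fx xl erefl) [].
move=> [_ _ hs H]; apply/seteqP; split => nu.
  move=> /(shift_mem _ fx xl erefl) [h1 h2].
  apply/(shift_mem _ fy yl erefl); split; first by rewrite -hs.
  by apply/(H _ (esym h1)).
move=> /(shift_mem _ fy yl erefl) [h1 h2].
apply/(shift_mem _ fx xl erefl); split; first by rewrite hs.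
have h3 : rng nu = src l by rewrite -h1 hs.
by apply/(H _ h3).
Qed.


Lemma arrow_sym l l' x y : arrow_at l l' x y -> arrow_at l' l y x.
Proof.
move=> [h1 h2 hs H]; split => // nu hnu.
by apply: iff_sym; apply: H; rewrite hnu hs.
Qed.

Lemma arrow_trans l l' l'' x y z :
  arrow_at l l' x y -> arrow_at l' l'' y z -> arrow_at l l'' x z.
Proof.
move=> [h1 h2 hs H] [h1' h2' hs' H']; split => //; first by rewrite hs.
move=> nu hnu; apply: iff_trans (H _ hnu) _; apply: H'; by rewrite hnu.
Qed.

Lemma arrow_ext l l' x y a : arrow_at l l' x y -> rng a = src l ->
  x (comp l a) -> arrow_at (comp l a) (comp l' a) x y.
Proof.
move=> [h1 h2 hs H] ha xa.
have ha' : src l' = rng a by rewrite -hs ha.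
split => //; first by apply/(H _ ha).
  by rewrite !src_comp // ha.
move=> nu; rewrite src_comp // => hnu.
rewrite -!comp_assoc //; apply: H; by rewrite rng_comp.
Qed.

Lemma arrow_restr1 k k' g x y : is_filter x -> is_filter y -> y k' ->
  src k = rng g -> src k' = rng g ->
  arrow_at (comp k g) (comp k' g) x y ->
  forall nu, rng nu = src k -> x (comp k nu) -> y (comp k' nu).
Proof.
move=> fx fy yk' hk hk' [h1 h2 hs H] nu hnu xnu.
have hnu' := esym hnu.
have [r [xr [b1 [hb1 E1]] [b2 [hb2 E2]]]] := filter_dir fx xnu h1.
rewrite src_comp // in hb1; rewrite src_comp // in hb2.
rewrite -comp_assoc // in E1; rewrite -comp_assoc // in E2.
have e : comp nu b1 = comp g b2.
  apply: (@cancel_l k); rewrite ?rng_comp // -?E1 //.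
have hk'nu : src k' = rng nu by rewrite hk' -hk.
have := (H b2); rewrite src_comp // => /(_ (esym hb2)) /iffLR.
rewrite -comp_assoc // -E2 => /(_ xr).
rewrite -comp_assoc // -e comp_assoc //.
move=> yy; apply: filter_her fy yy _; apply: prec_comp.
by rewrite src_comp //; rewrite hk' -hk.
Qed.

Lemma arrow_restr k k' g x y : is_filter x -> is_filter y -> x k -> y k' ->
  src k = rng g -> src k' = rng g ->
  arrow_at (comp k g) (comp k' g) x y -> arrow_at k k' x y.
Proof.
move=> fx fy xk yk' hk hk' A.
split => //; first by rewrite hk hk'.
move=> nu hnu; split; first exact: (arrow_restr1 fx fy yk' hk hk' A).
apply: (arrow_restr1 fy fx xk hk' hk (arrow_sym A)); by rewrite hnu hk hk'.
Qed.

Lemma arrow_det l l' x x' y : is_filter x -> is_filter x' ->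
  arrow_at l l' x y -> arrow_at l l' x' y -> x `<=` x'.
Proof.
move=> fx fx' [h1 h2 hs H] [h1' h2' hs' H'] mu xmu.
have [r [xr pm [nu [hnu E]]]] := filter_dir fx xmu h1.
subst r; apply: (filter_her fx' _ pm).
by apply/(H' _ (esym hnu)); apply/(H _ (esym hnu)).
Qed.

Lemma grp_aux (a b c e f g : Q) : a * b = c * e -> a * f^-1 = c * g^-1 -> f * b = g * e.
Proof.
move=> h1 h2.
have hf : f = g * c^-1 * a.
  apply: invg_inj; rewrite !invgM !invgK.
  by apply: (@mulgI _ a); rewrite h2 mulVKg.
by rewrite hf -mulgA h1 -mulgA mulKg.
Qed.

Lemma arrow_refine j j' k k' x z : is_filter x -> is_filter z ->
  arrow_at j j' x z -> arrow_at k k' x z ->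
  d j * (d j')^-1 = d k * (d k')^-1 ->
  exists la la', [/\ arrow_at la la' x z, prec j la, prec j' la' &
    forall x' z', is_filter x' -> is_filter z' -> x' la -> z' la' ->
      arrow_at j j' x' z' -> arrow_at k k' x' z'].
Proof.
move=> fx fz Aj Ak hd.
have [xj _ hsj _] := Aj; have [xk _ hsk _] := Ak.
have [la [xla [al [hal Ea]] [ga [hga Eg]]]] := filter_dir fx xj xk.
have Aa : arrow_at la (comp j' al) x z by rewrite Ea; apply: arrow_ext => //; rewrite -Ea.
have Ag : arrow_at la (comp k' ga) x z by rewrite Eg; apply: arrow_ext => //; rewrite -Eg.
have e : comp j' al = comp k' ga.
  apply: (filter_uniq fz); [by case: Aa | by case: Ag |].
  rewrite !d_comp -?hsj -?hsk //.
  apply: (@grp_aux (d j) _ (d k)) => //.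
  by rewrite -!d_comp // -Ea -Eg.
exists la, (comp j' al); split => //.
- by rewrite Ea; apply: prec_comp.
- by apply: prec_comp; rewrite -hsj.
move=> x' z' fx' fz' x'la z'la' Aj'.
have A1 : arrow_at la (comp j' al) x' z' by rewrite Ea; apply: arrow_ext => //; rewrite -Ea.
rewrite e Eg in A1.
apply: (arrow_restr fx' fz' _ _ hga) A1 => //.
- by apply: (filter_her fx' x'la); rewrite Eg; apply: prec_comp.
- by apply: (filter_her fz' z'la'); rewrite e; apply: prec_comp; rewrite -hsk.
- by rewrite -hsk.
Qed.

Definition Tr a b w := [set mu | exists nu, [/\ rng nu = src a, w (comp a nu) & prec mu (comp b nu)]].

Lemma Tr_filter a b w : is_filter w -> w a -> src a = src b -> is_filter (Tr a b w).
Proof.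
move=> fw wa hab; split.
- exists b; exists (idm (src a)); split; first by rewrite rng_idm.
    by rewrite comp_idr.
  by rewrite hab comp_idr; apply: prec_refl.
- by move=> m l pml [nu [h1 h2 h3]]; exists nu; split => //; apply: prec_trans h3.
move=> l1 l2 [n1 [h1 w1 p1]] [n2 [h2 w2 p2]].
have [r [wr [b1 [hb1 E1]] [b2 [hb2 E2]]]] := filter_dir fw w1 w2.
rewrite src_comp // in hb1; rewrite src_comp // in hb2.
rewrite -comp_assoc // in E1; rewrite -comp_assoc // in E2.
have e : comp n1 b1 = comp n2 b2.
  by apply: (@cancel_l a); rewrite ?rng_comp // -?E1 // -E2.
exists (comp b (comp n1 b1)); split.
- exists (comp n1 b1); split; [by rewrite rng_comp | by rewrite -E1 | exact: prec_refl].
- apply: (prec_trans p1); rewrite comp_assoc; last exact: hb1.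
    by apply: prec_comp; rewrite src_comp // -hab.
  by rewrite -hab.
- rewrite e; apply: (prec_trans p2); rewrite comp_assoc; last exact: hb2.
    by apply: prec_comp; rewrite src_comp // -hab.
  by rewrite -hab.
Qed.

Lemma Tr_arrow a b w : is_filter w -> w a -> src a = src b -> arrow_at b a (Tr a b w) w.
Proof.
move=> fw wa hab; split; [ | done | by rewrite hab | ].
  exists (idm (src a)); split; [by rewrite rng_idm | by rewrite comp_idr |].
  by rewrite hab comp_idr; apply: prec_refl.
move=> nu hnu; have hnu' := esym hnu; split.
  move=> [nu1 [h1 h2 [be [hbe E]]]].
  rewrite src_comp // in hbe; rewrite -comp_assoc // in E.
  have e : nu1 = comp nu be.
    by apply: (@cancel_l b) => //; [rewrite -hab h1 | rewrite rng_comp].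
  subst nu1; apply: (filter_her fw h2); rewrite comp_assoc //; last by rewrite hab.
  by apply: prec_comp; rewrite src_comp // hab.
by move=> h; exists nu; split => //; [rewrite hab | apply: prec_refl].
Qed.

Lemma Tr_mono a b w w' : w `<=` w' -> Tr a b w `<=` Tr a b w'.
Proof. by move=> sw mu [nu [h1 h2 h3]]; exists nu; split => //; apply: sw. Qed.

End Basic.


Lemma seq_bound (s : seq nat) : exists n, forall i, i \in s -> (i < n)%N.
Proof.
elim: s => [|a s [n IH]]; first by exists 0%N.
exists (maxn a.+1 n) => i; rewrite in_cons => /orP [/eqP ->|/IH h].
  by rewrite leq_max leqnn.
by rewrite leq_max h orbT.
Qed.

Lemma fin_bound T (idx : T -> nat) (S : set T) : finite_set S ->
  exists n, forall a, S a -> (idx a < n)%N.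
Proof.
move=> /(finite_image idx) /finite_seqP [s E].
have [n H] := seq_bound s; exists n => a Sa; apply: H.
have : (idx @` S) (idx a) by exists a.
by rewrite E.
Qed.

Section Topo.
Variables (Q : groupType) (P : set Q) (C : category) (d : mor C -> Q).
Hypothesis HG : is_Pgraph P d.
Local Notation Lam := (mor C).
Local Notation X := (@path_space C).
Local Notation PO := (@path_opens C).
Implicit Types (a b c l m n nu mu : Lam) (x y w F G : set Lam) (U V : set (set Lam)).

Lemma cyl_pow F G : finite_set F -> finite_set G -> pow_open (cyl F G).
Proof. by move=> fF fG x cx; exists F, G; split. Qed.

Lemma cylU F1 G1 F2 G2 x : cyl F1 G1 x -> cyl F2 G2 x -> cyl (F1 `|` F2) (G1 `|` G2) x.
Proof.
move=> [h1 h2] [h3 h4]; split; first by move=> a [/h1|/h3].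
by rewrite setIUl h2 h4 setU0.
Qed.

Lemma cylU_sub F1 G1 F2 G2 : cyl (F1 `|` F2) (G1 `|` G2) `<=` cyl F1 G1 `&` cyl F2 G2.
Proof.
move=> x [h1 h2]; rewrite setIUl in h2.
have [e1 e2] : G1 `&` x = set0 /\ G2 `&` x = set0.
  by split; apply/seteqP; split => // a ha; rewrite -h2; [left|right].
by split; split => // a ha; apply: h1; [left|right].
Qed.

Lemma popen_iff (S : set (set Lam)) : PO S <->
  (S `<=` X /\ forall x, S x -> exists F G, [/\ finite_set F, finite_set G, cyl F G x &
      cyl F G `&` X `<=` S]).
Proof.
split.
  move=> [U [pU ->]]; split; first by move=> x [].
  move=> x [Ux Xx]; have [F [G [fF fG cx sub]]] := pU x Ux.
  by exists F, G; split => // y [cy Xy]; split => //; apply: sub.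
move=> [SX H].
exists [set z | exists F G, [/\ finite_set F, finite_set G, cyl F G z & cyl F G `&` X `<=` S]].
split.
  move=> z [F [G [fF fG cz sub]]]; exists F, G; split => // z' cz'.
  by exists F, G.
apply/seteqP; split.
  by move=> x Sx; split; [apply: H | apply: SX].
by move=> x [[F [G [fF fG cx sub]]] Xx]; apply: sub.
Qed.

Lemma popen_cyl F G : finite_set F -> finite_set G -> PO (cyl F G `&` X).
Proof. by move=> fF fG; exists (cyl F G); split => //; apply: cyl_pow. Qed.

Lemma popenI U V : PO U -> PO V -> PO (U `&` V).
Proof.
move=> /popen_iff [UX HU] /popen_iff [VX HV]; apply/popen_iff; split.
  by move=> x [/UX].
move=> x [Ux Vx].
have [F1 [G1 [f1 g1 c1 s1]]] := HU x Ux.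
have [F2 [G2 [f2 g2 c2 s2]]] := HV x Vx.
exists (F1 `|` F2), (G1 `|` G2); split; [by rewrite finite_setU | by rewrite finite_setU | exact: cylU |].
move=> y [/cylU_sub [cy1 cy2] Xy]; split; [apply: s1 | apply: s2]; by split.
Qed.

Lemma popenT : PO X.
Proof.
exists setT; split; last by rewrite setTI.
move=> x _; exists set0, set0; split => //; try exact: finite_set0.
by split => //; rewrite set0I.
Qed.

Lemma X_hausdorff : is_hausdorff X PO.
Proof.
move=> x y Xx Xy nxy.
have [a hxy] : exists a, ~ (x a <-> y a).
  apply/existsNP => H; apply: nxy; apply/seteqP; split => a; by move/(H a).
have fin1 := finite_set1 a.
case: (pselect (x a)) => xa.
  have nya : ~ y a by move=> ya; apply: hxy.
  exists (cyl [set a] set0 `&` X), (cyl set0 [set a] `&` X); split;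
    try apply: popen_cyl => //.
  - by split => //; split; [move=> ? -> | rewrite set0I].
  - split => //; split => //; apply/seteqP; split => // b [-> ?]; exact: nya.
  - apply/seteqP; split => // z [[[h1 _] _] [[_ h2] _]].
    have : ([set a] `&` z) a by split => //; apply: h1.
    by rewrite h2.
have ya : y a by apply: contrapT => nya; apply: hxy; split.
exists (cyl set0 [set a] `&` X), (cyl [set a] set0 `&` X); split;
  try apply: popen_cyl => //.
- split => //; split => //; apply/seteqP; split => // b [-> ?]; exact: xa.
- by split => //; split; [move=> ? -> | rewrite set0I].
- apply/seteqP; split => // z [[[_ h2] _] [[h1 _] _]].
  have : ([set a] `&` z) a by split => //; apply: h1.
  by rewrite h2.
Qed.

End Topo.


Section Compact.
Variables (C : category).
Local Notation Lam := (mor C).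
Local Notation X := (@path_space C).
Local Notation PO := (@path_opens C).
Implicit Types (a b c l m n nu mu : Lam) (x y w F G : set Lam) (U V : set (set Lam)).
Variables (idx : Lam -> nat) (idxI : injective idx).
Variables (K : set (set Lam)) (Cv : set (set (set Lam))).

Definition agree (k : nat) (D : set Lam) y := forall a, (idx a < k)%N -> (y a <-> D a).

Definition fincov (E : set (set Lam)) := exists D, [/\ finite_set D, D `<=` Cv &
   E `<=` \bigcup_(U in D) U].

Fixpoint st (k : nat) : set Lam :=
  match k with
  | 0 => set0
  | k'.+1 => if `[< ~ fincov (K `&` agree k'.+1 (st k' `|` [set a | idx a = k'])) >]
             then st k' `|` [set a | idx a = k'] else st k'
  end.

Lemma st_small k a : st k a -> (idx a < k)%N.
Proof.
elim: k => [//|k IH] /=; case: asboolP => [?|?].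
  by move=> [/IH h|/= e]; [apply: ltnW| rewrite e].
by move/IH => h; apply: ltnW.
Qed.

Lemma st_stable k a : (idx a < k)%N -> (st k a <-> st (idx a).+1 a).
Proof.
elim: k => [//|k IH]; rewrite ltnS leq_eqVlt => /orP [/eqP <-|lt]; first by [].
rewrite -(IH lt) /=; case: asboolP => [?|?] //.
split; last by left.
by move=> [//|e]; rewrite e ltnn in lt.
Qed.

Lemma good_st k : ~ fincov K -> ~ fincov (K `&` agree k (st k)).
Proof.
move=> nK; elim: k => [|k IH].
  move=> [D [fD sD cD]]; apply: nK; exists D; split => // y Ky; apply: cD; by split.
rewrite /=; case: asboolP => [//|nn]; move/contrapT: nn => [D1 [f1 s1 c1]] [D2 [f2 s2 c2]].
apply: IH; exists (D1 `|` D2); split; first by rewrite finite_setU.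
  by move=> U [/s1|/s2].
move=> y [Ky ay].
case: (pselect (exists a, idx a = k /\ y a)) => [[a0 [ia0 ya0]]|no].
  have [U DU Uy] : (\bigcup_(U in D1) U) y.
    apply: c1; split => // a; rewrite ltnS leq_eqVlt => /orP [/eqP ia|lt].
      have e : a = a0 by apply: idxI; rewrite ia ia0.
      subst a; split => // _; by right.
    rewrite (ay a lt); split; first by left.
    by move=> [//|e]; rewrite e ltnn in lt.
  by exists U => //; left.
have [U DU Uy] : (\bigcup_(U in D2) U) y.
  apply: c2; split => // a; rewrite ltnS leq_eqVlt => /orP [/eqP ia|lt]; last exact: ay.
  split; first by move=> ya; exfalso; apply: no; exists a.
  by move/st_small; rewrite ia ltnn.
by exists U => //; right.
Qed.

Definition pt := [set a | st (idx a).+1 a].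

Lemma agree_pt k y : agree k (st k) y -> forall a, (idx a < k)%N -> (y a <-> pt a).
Proof. by move=> ag a lt; rewrite (ag a lt); apply: st_stable. Qed.

End Compact.

Section Compact2.
Variables (Q : groupType) (P : set Q) (C : category) (d : mor C -> Q).
Hypothesis HG : is_Pgraph P d.
Local Notation Lam := (mor C).
Local Notation X := (@path_space C).
Local Notation PO := (@path_opens C).
Implicit Types (a b c l m n nu mu : Lam) (x y w F G : set Lam) (U V : set (set Lam)).

Lemma idx_ex : exists idx : Lam -> nat, injective idx.
Proof.
have [cnt _ _ _ _] := HG.
case/countable_injP: cnt => f fI; exists f => a b e.
by apply: fI => //; apply: in_setT.
Qed.

Lemma cyl_compact ka F G : FA ka -> F ka -> finite_set F -> finite_set G ->
  is_compact X PO (cyl F G `&` X).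
Proof.
move=> FAk Fk fF fG; split; first by move=> x [].
have [idx idxI] := idx_ex.
set K := cyl F G `&` X.
move=> Cv CvO Kcov.
have [//|nK] := pselect (fincov Cv K); exfalso.
have good := good_st idxI nK.
have ne k : exists y, K y /\ agree idx k (st idx K Cv k) y.
  apply: contrapT => nn; apply: (good k); exists set0; split => //.
  by move=> y [Ky ay]; exfalso; apply: nn; exists y.
set p := pt idx K Cv.
have ag k y : agree idx k (st idx K Cv k) y -> forall a, (idx a < k)%N -> (y a <-> p a).
  exact: agree_pt.
have bnd S : finite_set S -> exists k, forall a, S a -> (idx a < k)%N by apply: fin_bound.
have fy y : K y -> is_filter y by move=> [_ [fy _]].
have pF : F `<=` p.
  move=> a Fa; have [y [[[cF _] _] ay]] := ne (idx a).+1.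
  by apply/(ag _ _ ay a (ltnSn _)); apply: cF.
have pG : G `&` p = set0.
  apply/seteqP; split => // a [Ga pa]; have [y [[[_ cG] _] ay]] := ne (idx a).+1.
  have ya : y a by apply/(ag _ _ ay a (ltnSn _)).
  have : (G `&` y) a by []. by rewrite cG.
have pher m l : prec m l -> p l -> p m.
  move=> pml pl; have [k hk] := bnd _ (finite_set2 m l).
  have [y [Ky ay]] := ne k.
  apply/(ag _ _ ay m (hk m (or_introl erefl))).
  by apply: (filter_her (fy _ Ky) _ pml); apply/(ag _ _ ay l (hk l (or_intror erefl))).
have paux : forall c m, p c -> prec ka c -> p m -> exists c', [/\ p c', prec c c' & prec m c'].
  move=> c m.
  move=> pc kc pm.
  have [J [fJ EJ]] := FAk c m kc.
  have fJcm : finite_set (J `|` [set c; m]) by rewrite finite_setU; split => //; exact: finite_set2.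
  have [k hk] := bnd _ fJcm.
  have [y [Ky ay]] := ne k.
  have yc : y c by apply/(ag _ _ ay c (hk c (or_intror (or_introl erefl)))).
  have ym : y m by apply/(ag _ _ ay m (hk m (or_intror (or_intror erefl)))).
  have [r [yr pcr pmr]] := filter_dir (fy _ Ky) yc ym.
  have : (ext c `&` ext m) r by split.
  rewrite EJ => -[j Jj jr].
  exists j; split.
  - apply/(ag _ _ ay j (hk j (or_introl Jj))); exact: (filter_her (fy _ Ky) yr jr).
  - have : (\bigcup_(k0 in J) ext k0) j by exists j => //; apply: prec_refl.
    by rewrite -EJ => -[].
  - have : (\bigcup_(k0 in J) ext k0) j by exists j => //; apply: prec_refl.
    by rewrite -EJ => -[].
have pfil : is_filter p.
  split; [by exists ka; apply: pF | exact: pher |].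
  move=> l m pl pm.
  have [c1 [pc1 kc1 lc1]] := paux ka l (pF _ Fk) (prec_refl _) pl.
  have [c2 [pc2 c12 mc2]] := paux c1 m pc1 kc1 pm.
  by exists c2; split => //; apply: prec_trans lc1 c12.
have Kp : K p by split; [split | split => //; exists ka; split => //; apply: pF].
have [U CvU Up] := Kcov p Kp.
have [U0 [pU0 EU]] := CvO U CvU.
have [F' [G' [fF' fG' cp sub]]] : exists F' G', [/\ finite_set F', finite_set G',
    cyl F' G' p & cyl F' G' `<=` U0].
  by apply: pU0; move: Up; rewrite EU => -[].
have fFG : finite_set (F' `|` G') by rewrite finite_setU.
have [k hk] := bnd _ fFG.
apply: (good k); exists [set U]; split; [exact: finite_set1 | by move=> ? -> |].
move=> y [Ky ay]; exists U => //; rewrite EU; split; last by case: Ky.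
apply: sub; have [cF cG] := cp; split.
  by move=> a Fa; apply/(ag _ _ ay a (hk a (or_introl Fa))); apply: cF.
apply/seteqP; split => // a [Ga ya].
have pa : p a by apply/(ag _ _ ay a (hk a (or_intror Ga))).
have : (G' `&` p) a by []. by rewrite cG.
Qed.

End Compact2.


Section Grp.
Variables (Q : groupType) (P : set Q) (C : category) (d : mor C -> Q).
Hypothesis HG : is_Pgraph P d.
Local Notation Lam := (mor C).
Local Notation X := (@path_space C).
Local Notation PO := (@path_opens C).
Local Notation G := (path_groupoid P d).
Local Notation OG := (groupoid_opens P d).
Local Notation gb := (gbasic P d).
Local Open Scope group_scope.
Implicit Types (a b c k r l m n nu mu : Lam) (x y w F : set Lam) (U V : set (set Lam)).
Implicit Types (g h : (set Lam * Q * set Lam)) (W : set (set Lam * Q * set Lam)).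

Lemma cylP F F' x : cyl F F' x <-> (F `<=` x /\ forall a, F' a -> ~ x a).
Proof.
split.
  move=> [h1 h2]; split => // a Fa xa.
  have : (F' `&` x) a by []. by rewrite h2.
move=> [h1 h2]; split => //; apply/seteqP; split => // a [Fa xa]; exact: h2 Fa xa.
Qed.

Lemma FA_up k r : FA k -> prec k r -> FA r.
Proof. by move=> Fk kr m n rm; apply: Fk; apply: prec_trans kr rm. Qed.

Lemma Xfil x : X x -> is_filter x. Proof. by case. Qed.

Definition Z a := cyl [set a] set0 `&` X.

Lemma Z_iff a x : Z a x <-> x a /\ X x.
Proof.
split; first by move=> [[h _] Xx]; split => //; apply: h.
by move=> [xa Xx]; split => //; split; [move=> ? -> | rewrite set0I].
Qed.

Lemma PO_Z a : PO (Z a).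
Proof. apply: popen_cyl; [exact: finite_set1 | exact: finite_set0]. Qed.

Lemma X_FA a x : FA a -> is_filter x -> x a -> X x.
Proof. by move=> Fa fx xa; split => //; exists a. Qed.

Lemma G_elim g : G g -> [/\ X g.1.1, X g.2 &
  exists l l', arrow_at l l' g.1.1 g.2 /\ g.1.2 = d l * (d l')^-1].
Proof.
case: g => [[x q] y] [Xx Xy [m [n [[Pm Pn] e [l [xl dl]] [l' [yl dl']] sh]]]].
simpl in *; split => //; exists l, l'; subst m n q; split => //.
by apply/(shift_arrow HG (Xfil Xx) (Xfil Xy) xl yl).
Qed.

Lemma G_intro g l l' : X g.1.1 -> X g.2 -> arrow_at l l' g.1.1 g.2 ->
  g.1.2 = d l * (d l')^-1 -> G g.
Proof.
move=> Xx Xy A e; split => //; exists (d l), (d l'); split => //.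
- by split; apply: (dP HG).
- by exists l; split => //; case: A.
- by exists l'; split => //; case: A.
apply/(shift_arrow HG (Xfil Xx) (Xfil Xy)) => //; by case: A.
Qed.

Lemma gb_elim (p q : Q) U V g : gb p q U V g -> [/\ X g.1.1, X g.2, U g.1.1, V g.2 &
  g.1.2 = p * q^-1 /\ exists l l', [/\ d l = p, d l' = q & arrow_at l l' g.1.1 g.2]].
Proof.
move=> [Gg e Ux Vy [[l [xl dl]] [l' [yl dl']] sh]].
have [Xx Xy _] := G_elim Gg.
split => //; split => //; exists l, l'; split => //.
by subst p q; apply/(shift_arrow HG (Xfil Xx) (Xfil Xy) xl yl).
Qed.

Lemma gb_intro (p q : Q) U V g l l' : X g.1.1 -> X g.2 -> U g.1.1 -> V g.2 ->
  d l = p -> d l' = q -> arrow_at l l' g.1.1 g.2 -> g.1.2 = p * q^-1 -> gb p q U V g.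
Proof.
move=> Xx Xy Ux Vy dl dl' A e; subst p q.
split => //; first by apply: (G_intro Xx Xy A).
split; [by exists l; split => //; case: A | by exists l'; split => //; case: A |].
apply/(shift_arrow HG (Xfil Xx) (Xfil Xy)) => //; by case: A.
Qed.

Lemma gb_mono (p q : Q) U V U' V' : U `<=` U' -> V `<=` V' -> gb p q U V `<=` gb p q U' V'.
Proof. by move=> sU sV g [h1 h2 h3 h4 h5]; split => //; [apply: sU | apply: sV]. Qed.

Lemma gb_open (p q : Q) U V : PO U -> PO V -> OG (gb p q U V).
Proof.
move=> pU pV; split; first by move=> g [].
move=> g gg; exists p, q, U, V; split => //.
have [_ _ _ _ [_ [l [l' [dl dl' _]]]]] := gb_elim gg.
by split; [rewrite -dl | rewrite -dl']; apply: (dP HG).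
Qed.

Lemma OG_elim W g : OG W -> W g -> exists (p q : Q) U V,
  [/\ PO U, PO V, gb p q U V g & gb p q U V `<=` W].
Proof.
move=> [_ H] Wg; have [p [q [U [V [_ pU pV gg sub]]]]] := H g Wg.
by exists p, q, U, V.
Qed.

Lemma G_gb g U V : G g -> U g.1.1 -> V g.2 -> exists p q, gb p q U V g.
Proof.
move=> Gg Ux Vy; have [Xx Xy [l [l' [A e]]]] := G_elim Gg.
by exists (d l), (d l'); apply: (gb_intro Xx Xy Ux Vy erefl erefl A e).
Qed.

Lemma G_hausdorff : is_hausdorff G OG.
Proof.
move=> g h Gg Gh ngh.
have [ex|ex] := pselect (g.1.1 = h.1.1); last first.
  have [Xx _ _] := G_elim Gg; have [Xx' _ _] := G_elim Gh.
  have [U [U' [pU pU' Ux Ux' dis]]] := X_hausdorff Xx Xx' ex.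
  have [p [q gg]] := G_gb (V := X) Gg Ux (let: And3 _ Xy _ := G_elim Gg in Xy).
  have [p' [q' hh]] := G_gb (V := X) Gh Ux' (let: And3 _ Xy _ := G_elim Gh in Xy).
  exists (gb p q U X), (gb p' q' U' X); split => //; try apply: gb_open => //; try exact: popenT.
  apply/seteqP; split => // k [[_ _ k1 _ _] [_ _ k2 _ _]].
  have : (U `&` U') k.1.1 by []. by rewrite dis.
have [ey|ey] := pselect (g.2 = h.2); last first.
  have [_ Xy _] := G_elim Gg; have [_ Xy' _] := G_elim Gh.
  have [U [U' [pU pU' Ux Ux' dis]]] := X_hausdorff Xy Xy' ey.
  have [p [q gg]] := G_gb (U := X) Gg (let: And3 Xx _ _ := G_elim Gg in Xx) Ux.
  have [p' [q' hh]] := G_gb (U := X) Gh (let: And3 Xx _ _ := G_elim Gh in Xx) Ux'.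
  exists (gb p q X U), (gb p' q' X U'); split => //; try apply: gb_open => //; try exact: popenT.
  apply/seteqP; split => // k [[_ _ _ k1 _] [_ _ _ k2 _]].
  have : (U `&` U') k.2 by []. by rewrite dis.
have eq' : g.1.2 <> h.1.2.
  move=> eq'; apply: ngh; move: ex ey eq'; clear Gg Gh; case: g => [[? ?] ?]; case: h => [[? ?] ?] /=.
  by move=> -> -> ->.
have [p [q gg]] := G_gb (U := X) (V := X) Gg (let: And3 Xx _ _ := G_elim Gg in Xx)
   (let: And3 _ Xy _ := G_elim Gg in Xy).
have [p' [q' hh]] := G_gb (U := X) (V := X) Gh (let: And3 Xx _ _ := G_elim Gh in Xx)
   (let: And3 _ Xy _ := G_elim Gh in Xy).
exists (gb p q X X), (gb p' q' X X); split => //; try apply: gb_open => //; try exact: popenT.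
apply/seteqP; split => // k [[_ e1 _ _ _] [_ e2 _ _ _]].
apply: eq'; have [_ _ _ _ [e3 _]] := gb_elim gg; have [_ _ _ _ [e4 _]] := gb_elim hh.
by rewrite e3 e4 -e1 -e2.
Qed.

Lemma ginvK g : ginv (ginv g) = g.
Proof. by case: g => [[x q] y]; rewrite /ginv /= invgK. Qed.

Lemma gb_inv (p q : Q) U V g : gb p q U V g -> gb q p V U (ginv g).
Proof.
move=> gg; have [Xx Xy Ux Vy [e [l [l' [dl dl' A]]]]] := gb_elim gg.
apply: (gb_intro (l := l') (l' := l)) => //; first exact: arrow_sym.
by rewrite /ginv /= e invgM invgK.
Qed.

Lemma G_inv g : G g -> G (ginv g).
Proof.
move=> Gg; have [p [q gg]] := G_gb (U := setT) (V := setT) Gg I I.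
by have [] := gb_inv gg.
Qed.

Lemma inv_cont : continuous_on G OG G OG (@ginv Q C).
Proof.
split; first exact: G_inv.
move=> W OW; split; first by move=> g [].
move=> g [Gg Wig].
have [p [q [U [V [pU pV gg sub]]]]] := OG_elim OW Wig.
exists q, p, V, U; split => //.
- have [_ _ _ _ [_ [l [l' [dl dl' _]]]]] := gb_elim gg.
  by split; [rewrite -dl' | rewrite -dl]; apply: (dP HG).
- by rewrite -(ginvK g); apply: gb_inv.
move=> k kk; split; first by case: kk.
by rewrite /preimage /=; apply: sub; rewrite -(ginvK (ginv k)) ginvK; apply: gb_inv.
Qed.

End Grp.


Section Mul.
Variables (Q : groupType) (P : set Q) (C : category) (d : mor C -> Q).
Hypothesis HG : is_Pgraph P d.
Local Notation Lam := (mor C).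
Local Notation X := (@path_space C).
Local Notation PO := (@path_opens C).
Local Notation G := (path_groupoid P d).
Local Notation OG := (groupoid_opens P d).
Local Notation gb := (gbasic P d).
Local Open Scope group_scope.
Implicit Types (a b c k r l m n nu mu : Lam) (x y w F : set Lam) (U V : set (set Lam)).
Implicit Types (g h : (set Lam * Q * set Lam)) (W : set (set Lam * Q * set Lam)).

Lemma arrow_ext' l l' x y a : arrow_at l l' x y -> rng a = src l' ->
  y (comp l' a) -> arrow_at (comp l a) (comp l' a) x y.
Proof. by move=> A ha ya; apply: arrow_sym; apply: arrow_ext => //; apply: arrow_sym. Qed.

Lemma grp_mid (a b c : Q) : (a * b^-1) * (b * c^-1) = a * c^-1.
Proof. by rewrite -mulgA mulKg. Qed.

Lemma mul_cont g h : G g -> G h -> gsrc g = grng h -> forall W, OG W -> W (gmul g h) ->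
  exists W1 W2, [/\ OG W1, OG W2, W1 g, W2 h &
    forall g' h', W1 g' -> W2 h' -> G g' -> G h' -> gsrc g' = grng h' -> W (gmul g' h')].
Proof.
move=> Gg Gh e W OW Wgh.
have [a' [b' [U0 [V0 [pU0 pV0 gbW subW]]]]] := OG_elim OW Wgh.
have [Xx Xz U0x V0z [eqr [k [k' [dk dk' Ak]]]]] := gb_elim HG gbW.
have [_ Xy [l1 [l1' [A1 e1]]]] := G_elim HG Gg.
have [_ _ [l2 [l2' [A2 e2]]]] := G_elim HG Gh.
rewrite /gsrc /grng in e; rewrite -e in A2.
have fy := Xfil Xy; have fx := Xfil Xx; have fz := Xfil Xz.
have [_ y1 _ _] := A1; have [y2 _ hs2 _] := A2.
have [rho [yr [al [hal Ea]] [be [hbe Eb]]]] := filter_dir fy y1 y2.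
have B1 : arrow_at (comp l1 al) rho g.1.1 g.2.
  by rewrite Ea; apply: arrow_ext' => //; rewrite -Ea.
have B2 : arrow_at rho (comp l2' be) g.2 h.2.
  by rewrite Eb; apply: arrow_ext => //; rewrite -Eb.
have B := arrow_trans B1 B2.
have [_ _ hs1 _] := A1.
have dc1 : d (comp l1 al) = d l1 * d al by rewrite (d_comp HG) // hs1.
have dc2 : d (comp l2' be) = d l2' * d be by rewrite (d_comp HG) // -hs2.
have hr1 : d rho = d l1' * d al by rewrite Ea (d_comp HG).
have hr2 : d rho = d l2 * d be by rewrite Eb (d_comp HG).
have dgr : d (comp l1 al) * (d (comp l2' be))^-1 = d k * (d k')^-1.
  rewrite dk dk' -eqr /gmul /= e1 e2 dc1 dc2.
  rewrite -[d l1 * (d l1')^-1](mulgKA (d al)) -hr1.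
  by rewrite -[d l2 * (d l2')^-1](mulgKA (d be)) -hr2 grp_mid.
have [la [la' [Ala pj pj' Href]]] := arrow_refine HG fx fz B Ak dgr.
have [xla zla' _ _] := Ala.
exists (gb (d (comp l1 al)) (d rho) (Z la `&` U0) X),
       (gb (d rho) (d (comp l2' be)) X (Z la' `&` V0)); split.
- by apply: gb_open => //; [apply: popenI => //; apply: PO_Z | apply: popenT].
- by apply: gb_open => //; [apply: popenT | apply: popenI => //; apply: PO_Z].
- apply: (gb_intro HG (l := comp l1 al) (l' := rho)) => //.
    by split => //; apply/Z_iff.
  by rewrite e1 dc1 hr1 mulgKA.
- have Xh1 : X h.1.1 by rewrite -e.
  have B2' : arrow_at rho (comp l2' be) h.1.1 h.2 by rewrite -e.
  have hZ : (Z la' `&` V0) h.2 by split => //; apply/Z_iff.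
  apply: (gb_intro HG (l := rho) (l' := comp l2' be)) => //.
  by rewrite e2 dc2 -[d l2 / d l2'](mulgKA (d be)) -hr2.
move=> g' h' gg' hh' Gg' Gh' e'.
have [Xx' Xy' [/Z_iff [x'la _] _] _ [eq1 [i [i' [di di' Ai]]]]] := gb_elim HG gg'.
have [_ Xz' _ [/Z_iff [z'la' _] _] [eq2 [i2 [i2' [di2 di2' Ai2]]]]] := gb_elim HG hh'.
rewrite /gsrc /grng in e'; rewrite -e' in Ai2.
have fx' := Xfil Xx'; have fy' := Xfil Xy'; have fz' := Xfil Xz'.
have ei : i' = i2.
  apply: (filter_uniq HG fy'); [by case: Ai | by case: Ai2 | by rewrite di' di2].
rewrite -ei in Ai2.
have Aii := arrow_trans Ai Ai2.
have ej : i = comp l1 al.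
  apply: (filter_uniq HG fx'); [by case: Ai | exact: (filter_her fx' x'la pj) | by rewrite di].
have ej' : i2' = comp l2' be.
  apply: (filter_uniq HG fz'); [by case: Ai2 | exact: (filter_her fz' z'la' pj') | by rewrite di2'].
rewrite ej ej' in Aii.
have Ak' := Href _ _ fx' fz' x'la z'la' Aii.
apply: subW; apply: (gb_intro HG (l := k) (l' := k')) => //.
- by case: gg' => _ _ [].
- by case: hh' => _ _ _ [].
rewrite /gmul /= eq1 eq2 grp_mid -dk -dk'.
by rewrite -dgr.
Qed.

End Mul.


Section Loc.
Variables (Q : groupType) (P : set Q) (C : category) (d : mor C -> Q).
Hypothesis HG : is_Pgraph P d.
Local Notation Lam := (mor C).
Local Notation X := (@path_space C).
Local Notation PO := (@path_opens C).
Local Notation G := (path_groupoid P d).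
Local Notation OG := (groupoid_opens P d).
Local Notation gb := (gbasic P d).
Local Open Scope group_scope.
Implicit Types (a b c k r l m n nu mu la sg : Lam) (x y w F : set Lam) (U V : set (set Lam)).
Implicit Types (g h : (set Lam * Q * set Lam)) (W : set (set Lam * Q * set Lam)).

Lemma Tr_fin la sg mu : FA la -> src sg = src la ->
  exists S, finite_set S /\ forall w, is_filter w -> (Tr sg la w mu <-> S `&` w !=set0).
Proof.
move=> Fla hs.
have [J [fJ EJ]] := Fla la mu (prec_refl la).
have H : forall j, exists nu, J j -> src la = rng nu /\ j = comp la nu.
  move=> j; case: (pselect (J j)) => Jj; last by exists j.
  have : (\bigcup_(k in J) ext k) j by exists j => //; apply: prec_refl.
  by rewrite -EJ => -[[nu [h1 h2]] _]; exists nu.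
have [f Hf] := boolp.choice H.
exists ((fun j => comp sg (f j)) @` J); split; first exact: finite_image.
move=> w fw; split.
  move=> [nu [h1 h2 h3]].
  have hl : src la = rng nu by rewrite h1 hs.
  have : (ext la `&` ext mu) (comp la nu) by split; [apply: prec_comp | exact: h3].
  rewrite EJ => -[j Jj [be [hbe Eb]]].
  have [hf1 hf2] := Hf j Jj.
  rewrite hf2 src_comp // in hbe.
  rewrite hf2 -comp_assoc // in Eb.
  have e : nu = comp (f j) be by apply: (cancel_l HG hl) => //; rewrite rng_comp.
  exists (comp sg (f j)); split; first by exists j.
  apply: (filter_her fw h2); rewrite e comp_assoc //; last by rewrite hs.
  by apply: prec_comp; rewrite src_comp // hs.
move=> [e [[j Jj <-] we]].
have [hf1 hf2] := Hf j Jj.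
exists (f j); split => //; first by rewrite -hf1 hs.
have : (\bigcup_(k in J) ext k) j by exists j => //; apply: prec_refl.
by rewrite -EJ -hf2 => -[].
Qed.

Lemma Tr_cont la sg F F' y : FA la -> src sg = src la -> is_filter y ->
  cyl F F' (Tr sg la y) -> exists F1 G1, [/\ finite_set F -> finite_set F1,
    finite_set F' -> finite_set G1, cyl F1 G1 y &
    forall y', is_filter y' -> cyl F1 G1 y' -> cyl F F' (Tr sg la y')].
Proof.
move=> Fla hs fy /cylP [cF cG].
have [S HS] := boolp.choice (fun mu => Tr_fin mu Fla hs).
have H : forall mu, exists e, F mu -> (S mu `&` y) e.
  move=> mu; case: (pselect (F mu)) => Fm; last by exists mu.
  by have [e he] := iffLR ((HS mu).2 y fy) (cF _ Fm); exists e.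
have [ef Hef] := boolp.choice H.
exists (ef @` F), (\bigcup_(mu in F') S mu); split.
- exact: finite_image.
- by move=> fF'; apply: bigcup_finite => // mu _; case: (HS mu).
- apply/cylP; split; first by move=> _ [mu Fm <-]; case: (Hef mu Fm).
  move=> e [mu Gm Se] ye; apply: (cG mu Gm); apply/((HS mu).2 y fy); by exists e.
move=> y' fy' /cylP [cF1 cG1]; apply/cylP; split.
  move=> mu Fm; apply/((HS mu).2 y' fy'); exists (ef mu); split.
    by case: (Hef mu Fm).
  by apply: cF1; exists mu.
move=> mu Gm /((HS mu).2 y' fy') [e [Se ye]]; apply: (cG1 e) => //; by exists mu.
Qed.

End Loc.


Section Wsec.
Variables (Q : groupType) (P : set Q) (C : category) (d : mor C -> Q).
Hypothesis HG : is_Pgraph P d.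
Local Notation Lam := (mor C).
Local Notation X := (@path_space C).
Local Notation PO := (@path_opens C).
Local Notation G := (path_groupoid P d).
Local Notation OG := (groupoid_opens P d).
Local Notation gb := (gbasic P d).
Local Open Scope group_scope.
Implicit Types (a b c k r l m n nu mu la sg : Lam) (x y w F : set Lam) (U V : set (set Lam)).
Implicit Types (g h : (set Lam * Q * set Lam)) (W : set (set Lam * Q * set Lam)).

Lemma G_FA g : G g -> exists la sg, [/\ FA la, FA sg, arrow_at la sg g.1.1 g.2 &
  g.1.2 = d la * (d sg)^-1].
Proof.
move=> Gg; have [[fx [ka [xk Fk]]] [fy [ka' [yk Fk']]] [l [l' [A e]]]] := G_elim HG Gg.
have [xl yl hs _] := A.
have [r [xr [al [hal Ea]] pkr]] := filter_dir fx xl xk.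
have A1 : arrow_at (comp l al) (comp l' al) g.1.1 g.2.
  by apply: arrow_ext => //; rewrite -Ea.
have [_ y1 _ _] := A1.
have [r2 [yr2 [be [hbe Eb]] pkr2]] := filter_dir fy y1 yk.
have yb : g.2 (comp (comp l' al) be) by rewrite -Eb.
have A2 := arrow_ext' A1 (esym hbe) yb.
have hal' : src l' = rng al by rewrite -hs.
rewrite src_comp // in hbe.
have hb1 : src (comp l al) = rng be by rewrite src_comp.
exists (comp (comp l al) be), (comp (comp l' al) be); split => //.
- apply: (FA_up (FA_up Fk pkr)); rewrite Ea; exact: prec_comp.
- by rewrite -Eb; apply: (FA_up Fk' pkr2).
rewrite e !(d_comp HG) ?src_comp //.
by rewrite !mulgKA.
Qed.

Section W.
Variables (la sg : Lam).
Hypotheses (Fla : FA la) (hs : src la = src sg).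
Let hs' : src sg = src la. Proof. by rewrite hs. Qed.

Definition Wb := gb (d la) (d sg) (Z la) (Z sg).

Lemma W_elim g : Wb g -> [/\ X g.1.1, X g.2, g.1.2 = d la * (d sg)^-1 &
  arrow_at la sg g.1.1 g.2].
Proof.
move=> Wg; have [Xx Xy /Z_iff [xla _] /Z_iff [ysg _] [e [l [l' [dl dl' A]]]]] := gb_elim HG Wg.
split => //.
have e1 : l = la by apply: (filter_uniq HG (Xfil Xx)) => //; case: A.
have e2 : l' = sg by apply: (filter_uniq HG (Xfil Xy)) => //; case: A.
by rewrite -e1 -e2.
Qed.

Lemma W_intro g : X g.1.1 -> X g.2 -> arrow_at la sg g.1.1 g.2 ->
  g.1.2 = d la * (d sg)^-1 -> Wb g.
Proof.
move=> Xx Xy A e; have [xla ysg _ _] := A.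
by apply: (gb_intro HG (l := la) (l' := sg)) => //; apply/Z_iff.
Qed.

Lemma W_tr g : Wb g -> g.1.1 = Tr sg la g.2.
Proof.
move=> Wg; have [Xx Xy _ A] := W_elim Wg.
have [_ ysg _ _] := A.
have A' := Tr_arrow HG (Xfil Xy) ysg hs'.
have fT := Tr_filter HG (Xfil Xy) ysg hs'.
apply/seteqP; split; [exact: (arrow_det (Xfil Xx) fT A A') | exact: (arrow_det fT (Xfil Xx) A' A)].
Qed.

Lemma W_surj y : X y -> y sg -> Wb ((Tr sg la y, d la * (d sg)^-1), y).
Proof.
move=> Xy ysg.
have A := Tr_arrow HG (Xfil Xy) ysg hs'.
have fT := Tr_filter HG (Xfil Xy) ysg hs'.
apply: W_intro => //=; apply: (X_FA Fla fT); by case: A.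
Qed.

Lemma W_inj g1 g2 : Wb g1 -> Wb g2 -> gsrc g1 = gsrc g2 -> g1 = g2.
Proof.
move=> W1 W2 e.
have t1 := W_tr W1; have t2 := W_tr W2.
have [_ _ q1 _] := W_elim W1; have [_ _ q2 _] := W_elim W2.
move: e t1 t2 q1 q2; rewrite /gsrc.
by case: g1 {W1 W2} => [[? ?] ?]; case: g2 => [[? ?] ?] /= -> -> -> -> ->.
Qed.

Lemma W_open : OG Wb.
Proof. by apply: gb_open => //; apply: PO_Z. Qed.

Lemma W_img : (@gsrc Q C) @` Wb = Z sg.
Proof.
apply/seteqP; split.
  move=> _ [g Wg <-]; have [_ Xy _ A] := W_elim Wg; apply/Z_iff; split => //; by case: A.
move=> y /Z_iff [ysg Xy]; by exists ((Tr sg la y, d la * (d sg)^-1), y); [apply: W_surj|].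
Qed.

Lemma W_cont V : PO V -> OG (Wb `&` (@gsrc Q C) @^-1` V).
Proof.
move=> pV.
have -> : Wb `&` (@gsrc Q C) @^-1` V = gb (d la) (d sg) (Z la) (Z sg `&` V).
  apply/seteqP; split.
    by move=> g [[h1 h2 h3 h4 h5] Vy]; split.
  by move=> g [h1 h2 h3 [h4 h4'] h5]; split.
by apply: gb_open => //; [apply: PO_Z | apply: popenI => //; apply: PO_Z].
Qed.

Lemma W_openmap (O : set (set Lam * Q * set Lam)) : OG O -> PO ((@gsrc Q C) @` (O `&` Wb)).
Proof.
move=> OV; apply/popen_iff; split.
  by move=> _ [g [_ Wg] <-]; have [_ Xy _ _] := W_elim Wg.
move=> _ [g [Vg Wg] <-]; rewrite /gsrc.
have [Xx Xy eq A] := W_elim Wg.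
have fx := Xfil Xx; have fy := Xfil Xy.
have [a' [b' [U1 [V1 [pU1 pV1 gg sub]]]]] := OG_elim OV Vg.
have [_ _ U1x V1y [eq2 [k [k' [dk dk' Ak]]]]] := gb_elim HG gg.
have dgr : d la * (d sg)^-1 = d k * (d k')^-1 by rewrite -eq dk dk' -eq2.
have [la2 [la2' [A2 pj pj' Href]]] := arrow_refine HG fx fy A Ak dgr.
have [_ HU1] := (popen_iff U1).1 pU1.
have [F [F' [fF fF' cx subU]]] := HU1 _ U1x.
have [_ HV1] := (popen_iff V1).1 pV1.
have [F1 [G1 [fF1 fG1 cy subV]]] := HV1 _ V1y.
have ex := W_tr Wg.
have [xla2 yla2' _ _] := A2.
have cx2 : cyl (F `|` [set la2]) F' (Tr sg la g.2).
  rewrite -ex; move/cylP: cx => [c1 c2]; apply/cylP; split => //.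
  by move=> a [/c1 //| ->].
have [F2 [G2 [fF2 fG2 cy2 cont]]] := Tr_cont HG Fla hs' fy cx2.
have ysg : g.2 sg by case: A.
exists (F2 `|` F1 `|` [set sg; la2']), (G2 `|` G1); split.
- have f1 : finite_set F2 by apply: fF2; rewrite finite_setU; split => //; exact: finite_set1.
  by rewrite !finite_setU; repeat split => //; exact: finite_set1.
- by rewrite finite_setU; split => //; apply: fG2.
- move/cylP: cy2 => [c1 c2]; move/cylP: cy => [c3 c4]; apply/cylP; split.
    by move=> a [[/c1|/c3]|[->|->]].
  by move=> a [/c2|/c4].
move=> y' [/cylP [c1 c2] Xy'].
have fy' := Xfil Xy'.
have ysg' : y' sg by apply: c1; right; left.
have y'la2' : y' la2' by apply: c1; right; right.
have cT : cyl (F `|` [set la2]) F' (Tr sg la y').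
  apply: cont => //; apply/cylP; split; first by move=> a Fa; apply: c1; left; left.
  by move=> a Ga; apply: c2; left.
move/cylP: cT => [cT1 cT2].
have Wg' := W_surj Xy' ysg'.
have [Xx' _ _ A'] := W_elim Wg'.
exists ((Tr sg la y', d la * (d sg)^-1), y') => //; split => //.
apply: sub; apply: (gb_intro HG (l := k) (l' := k')) => //=.
- apply: subU; split => //; apply/cylP; split; first by move=> a Fa; apply: cT1; left.
  exact: cT2.
- apply: subV; split => //; apply/cylP; split; first by move=> a Fa; apply: c1; left; right.
  by move=> a Ga; apply: c2; right.
- apply: (Href _ _ (Xfil Xx') fy') => //; by apply: cT1; right.
by rewrite dgr dk dk'.
Qed.

Lemma W_compact : FA sg -> is_compact G OG Wb.
Proof.
move=> Fsg; split; first by move=> g [].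
move=> Cv CvO cov.
set Cv' := [set (@gsrc Q C) @` (O `&` Wb) | O in Cv].
have Cv'O : Cv' `<=` PO by move=> _ [O CO <-]; apply: W_openmap; apply: CvO.
have covZ : Z sg `<=` \bigcup_(U in Cv') U.
  rewrite -W_img => _ [g Wg <-]; have [O CO Og] := cov g Wg.
  by exists ((@gsrc Q C) @` (O `&` Wb)); [exists O | exists g].
have [_ Zc] := cyl_compact HG (ka := sg) Fsg (F := [set sg]) (G := set0) erefl
  (finite_set1 _) (finite_set0 _).
have [D' [fD' sD' cD']] := Zc Cv' Cv'O covZ.
have H : forall U', exists O, D' U' -> Cv O /\ U' = (@gsrc Q C) @` (O `&` Wb).
  move=> U'; case: (pselect (D' U')) => h; last by exists set0.
  by have [O CO E] := sD' _ h; exists O.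
have [f Hf] := boolp.choice H.
exists (f @` D'); split; first exact: finite_image.
  by move=> _ [U' DU' <-]; case: (Hf U' DU').
move=> g Wg.
have : Z sg (gsrc g) by rewrite -W_img; exists g.
move/cD' => [U' DU' U'g].
have [CO E] := Hf U' DU'; rewrite E in U'g.
case: U'g => g' [O'g' Wg'] eg'.
have eq := W_inj Wg' Wg eg'.
by exists (f U'); [exists U' | rewrite -eq].
Qed.

End W.

End Wsec.


Section Part1.
Variables (Q : groupType) (P : set Q) (C : category) (d : mor C -> Q).
Hypothesis HG : is_Pgraph P d.
Local Notation Lam := (mor C).
Local Notation X := (@path_space C).
Local Notation PO := (@path_opens C).
Local Notation G := (path_groupoid P d).
Local Notation OG := (groupoid_opens P d).
Local Notation gb := (gbasic P d).
Local Open Scope group_scope.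
Implicit Types (a b c k r l m n nu mu la sg : Lam) (x y w F : set Lam) (U V : set (set Lam)).
Implicit Types (g h : (set Lam * Q * set Lam)) (W : set (set Lam * Q * set Lam)).

Lemma X_cob : compact_open_basis X PO.
Proof.
move=> U x pU Ux.
have [UX HU] := (popen_iff U).1 pU.
have [F [F' [fF fF' cx sub]]] := HU x Ux.
have [_ [ka [xk Fk]]] := UX x Ux.
have fFk : finite_set (F `|` [set ka]) by rewrite finite_setU; split => //; exact: finite_set1.
exists (cyl (F `|` [set ka]) F' `&` X); split.
- exact: popen_cyl.
- by apply: (cyl_compact HG Fk) => //; right.
- split; last exact: UX.
  by move/cylP: cx => [c1 c2]; apply/cylP; split => // a [/c1|->].
move=> y [/cylP [c1 c2] Xy]; apply: sub; split => //; apply/cylP; split => //.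
by move=> a Fa; apply: c1; left.
Qed.

Lemma X_lc : locally_compact X PO.
Proof.
move=> x Xx; have [K [pK cK Kx _]] := X_cob (@popenT C) Xx.
by exists K, K; split.
Qed.

Lemma G_lc : locally_compact G OG.
Proof.
move=> g Gg; have [la [sg [Fla Fsg A e]]] := G_FA HG Gg.
have [Xx Xy _] := G_elim HG Gg.
have [_ _ hs _] := A.
exists (Wb P d la sg), (Wb P d la sg); split => //.
- exact: W_open.
- exact: (W_intro HG).
- exact: (W_compact HG Fla hs).
Qed.

Lemma G_lh : local_homeo G OG X PO (@gsrc Q C).
Proof.
split; first by move=> g /(G_elim HG) [].
move=> g Gg; have [la [sg [Fla Fsg A e]]] := G_FA HG Gg.
have [Xx Xy _] := G_elim HG Gg.
have [_ _ hs _] := A.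
exists (Wb P d la sg); split.
- exact: W_open.
- exact: (W_intro HG).
- by rewrite (W_img HG Fla hs); apply: PO_Z.
- by move=> g1 g2 W1 W2 e'; apply: (W_inj HG hs W1 W2 e').
split.
  move=> O OO sub; rewrite -(setIidl sub); exact: (W_openmap HG Fla hs).
move=> V pV; exact: W_cont.
Qed.

Lemma G_top : topological_groupoid G OG (@gsrc Q C) (@grng Q C) (@gmul Q C) (@ginv Q C).
Proof. split; [exact: inv_cont | exact: mul_cont]. Qed.

Lemma G_ample : ample G OG X PO (@gsrc Q C) (@grng Q C) (@gmul Q C) (@ginv Q C).
Proof.
split; last exact: X_cob.
split; [exact: G_top | exact: G_lc | exact: X_lc | exact: X_hausdorff | exact: G_lh].
Qed.

Lemma G_sc : second_countable G OG.
Proof.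
set FS := [set A : set Lam | A `<=` setT /\ finite_set A].
set S := [set: Lam] `*` [set: Lam] `*` FS `*` FS `*` FS `*` FS.
set Phi := fun t : Lam * Lam * set Lam * set Lam * set Lam * set Lam =>
  gb (d t.1.1.1.1.1) (d t.1.1.1.1.2) (cyl t.1.1.1.2 t.1.1.2 `&` X) (cyl t.1.2 t.2 `&` X).
have [cL _ _ _ _] := HG.
have cFS : countable FS by apply: countable_finite_subset.
exists (Phi @` S); split.
- apply: sub_countable (card_image_le Phi S) _.
  by repeat apply: countableX.
- move=> _ [[[[[[l l'] F1] F2] F3] F4] [[[[[_ _] [_ f1]] [_ f2]] [_ f3]] [_ f4]] <-].
  by apply: gb_open => //; apply: popen_cyl.
move=> W g OW Wg.
have [p [q [U1 [V1 [pU1 pV1 gg sub]]]]] := OG_elim OW Wg.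
have [Xx Xy U1x V1y [e [l [l' [dl dl' A]]]]] := gb_elim HG gg.
have [_ HU1] := (popen_iff U1).1 pU1.
have [F [F' [fF fF' cx subU]]] := HU1 _ U1x.
have [_ HV1] := (popen_iff V1).1 pV1.
have [F1 [G1 [fF1 fG1 cy subV]]] := HV1 _ V1y.
exists (Phi (l, l', F, F', F1, G1)); split.
- by exists (l, l', F, F', F1, G1).
- by apply: (gb_intro HG (l := l) (l' := l')) => //; try (by split); rewrite e dl dl'.
move=> k kk; apply: sub; rewrite -dl -dl'; apply: (gb_mono subU subV kk).
Qed.

End Part1.


Section SubTop.
Variable T : Type.
Implicit Types (A B S K : set T) (O : set (set T)).

Lemma sub_hausdorff A O B : is_hausdorff A O -> B `<=` A -> is_hausdorff B (subspace_opens O B).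
Proof.
move=> H BA x y Bx By nxy; have [U [V [OU OV Ux Vy dis]]] := H x y (BA _ Bx) (BA _ By) nxy.
exists (U `&` B), (V `&` B); split => //; try by [exists U | exists V].
by apply/seteqP; split => // z [[Uz _] [Vz _]]; rewrite -dis.
Qed.

Lemma sub_sc A O B : second_countable A O -> second_countable B (subspace_opens O B).
Proof.
move=> [Bs [cB sB H]]; exists ((fun V => V `&` B) @` Bs); split.
- exact: (sub_countable (card_image_le _ _) cB).
- by move=> _ [V BV <-]; exists V; split => //; apply: sB.
move=> _ x [U [OU ->]] [Ux Bx]; have [V [BV Vx VU]] := H U x OU Ux.
exists (V `&` B); split => //; first by exists V.
by move=> z [/VU].
Qed.

Lemma closed_compact A O S K : S `<=` A -> is_compact A O K ->
  (forall a, A a -> ~ S a -> exists U, [/\ O U, U a & U `&` S = set0]) ->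
  is_compact S (subspace_opens O S) (K `&` S).
Proof.
move=> SA [KA cK] cl; split; first by move=> z [].
move=> Cv CvO cov.
have H1 : forall V, exists U, Cv V -> O U /\ V = U `&` S.
  move=> V; case: (pselect (Cv V)) => h; last by exists set0.
  by have [U [OU E]] := CvO V h; exists U.
have [u Hu] := boolp.choice H1.
set Cv1 := u @` Cv `|` [set U | O U /\ U `&` S = set0].
have H2 : K `<=` \bigcup_(U in Cv1) U.
  move=> k Kk; case: (pselect (S k)) => Sk.
    have [V CV Vk] := cov k (conj Kk Sk).
    have [_ E] := Hu V CV.
    exists (u V); first by rewrite /Cv1; left; exists V.
    by move: Vk; rewrite {1}E => -[].
  have [U [OU Uk dis]] := cl k (KA _ Kk) Sk.
  by exists U => //; rewrite /Cv1; right.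
have [D1 [fD1 sD1 cD1]] := cK Cv1 (fun U => fun h => match h with
  | or_introl (ex_intro2 V CV e) => eq_ind _ O (proj1 (Hu V CV)) _ e
  | or_intror (conj OU _) => OU end) H2.
have H3 : forall U, exists V, (u @` Cv) U -> Cv V /\ u V = U.
  move=> U; case: (pselect ((u @` Cv) U)) => h; last by exists set0.
  by case: h => V CV e; exists V.
have [v Hv] := boolp.choice H3.
exists (v @` (D1 `&` u @` Cv)); split.
- by apply: finite_image; apply: finite_setIl.
- by move=> _ [U [_ im] <-]; case: (Hv U im).
move=> z [Kz Sz]; have [U D1U Uz] := cD1 z Kz.
have [im|nim] := pselect ((u @` Cv) U).
  have [CV e] := Hv U im.
  exists (v U); first by exists U.
  have [_ E] := Hu (v U) CV; rewrite E e; by split.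
have [//|[OU dis]] := sD1 U D1U.
have : (U `&` S) z by []. by rewrite dis.
Qed.

End SubTop.


Section Bd.
Variables (Q : groupType) (P : set Q) (C : category) (d : mor C -> Q).
Hypothesis HG : is_Pgraph P d.
Local Notation Lam := (mor C).
Local Notation X := (@path_space C).
Local Notation PO := (@path_opens C).
Local Notation BX := (@bpath_space C).
Local Notation BPO := (@bpath_opens C).
Local Notation G := (path_groupoid P d).
Local Notation OG := (groupoid_opens P d).
Local Notation BG := (bpath_groupoid P d).
Local Notation BOG := (bgroupoid_opens P d).
Local Notation gb := (gbasic P d).
Local Open Scope group_scope.
Implicit Types (a b c k r l m n nu mu la sg : Lam) (x y w F : set Lam) (U V : set (set Lam)).
Implicit Types (g h : (set Lam * Q * set Lam)) (W : set (set Lam * Q * set Lam)).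

Lemma BX_X : BX `<=` X. Proof. by move=> x []. Qed.

Lemma BX_closed x : X x -> ~ BX x -> exists U, [/\ PO U, U x & U `&` BX = set0].
Proof.
move=> Xx nB.
have [U hU] : exists U, ~ (PO U -> U x -> U `&` (@maximal_filter C `&` X) !=set0).
  apply/existsNP => H; apply: nB; split => // U; exact: H.
have [pU Ux nn] : [/\ PO U, U x & ~ (U `&` (@maximal_filter C `&` X) !=set0)].
  split; [apply: contrapT => h; apply: hU => // | apply: contrapT => h; apply: hU => // |].
  by move=> h; apply: hU.
exists U; split => //; apply/seteqP; split => // z [Uz [_ Hz]].
by exfalso; apply: nn; apply: Hz.
Qed.

Lemma max_Tr y sg la : maximal_filter y -> y sg -> src sg = src la ->
  maximal_filter (Tr sg la y).
Proof.
move=> [fy my] ysg hs.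
have fT := Tr_filter HG fy ysg hs.
have A := Tr_arrow HG fy ysg hs.
have [Tla _ hs2 HA] := A.
split => // w fw sub.
have wla := sub _ Tla.
have hs3 : src la = src sg by rewrite hs.
have f3 := Tr_filter HG fw wla hs3.
have sy : y `<=` Tr la sg w.
  move=> mu ymu; have [r [yr pmr [nu [hnu E]]]] := filter_dir fy ymu ysg.
  subst r; have hnu' : rng nu = src la by rewrite -hnu hs.
  exists nu; split => //.
    by apply: sub; apply/(HA nu hnu').
have e3 := my _ f3 sy.
apply/seteqP; split => // mu wmu.
have [r [wr pmr [nu [hnu E]]]] := filter_dir fw wmu wla.
subst r; apply: (filter_her fT _ pmr).
apply/(HA nu (esym hnu)).
have : Tr la sg w (comp sg nu).
  by exists nu; split; [rewrite hnu | done | exact: prec_refl].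
by rewrite e3.
Qed.

Lemma BX_inv la sg x y : FA la -> arrow_at la sg x y -> X x -> BX y -> BX x.
Proof.
move=> Fla A Xx [Xy By]; split => // U pU Ux.
have [xla ysg hs _] := A.
have hs' : src sg = src la by rewrite hs.
have fy := Xfil Xy; have fx := Xfil Xx.
have [_ HU] := (popen_iff U).1 pU.
have [F [F' [fF fF' cx subU]]] := HU x Ux.
have A' := Tr_arrow HG fy ysg hs'.
have fT := Tr_filter HG fy ysg hs'.
have ex : x = Tr sg la y.
  by apply/seteqP; split; [exact: (arrow_det fx fT A A') | exact: (arrow_det fT fx A' A)].
rewrite ex in cx.
have [F2 [G2 [fF2 fG2 cy cont]]] := Tr_cont HG Fla hs' fy cx.
have pN : PO (cyl (F2 `|` [set sg]) G2 `&` X).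
  apply: popen_cyl; [rewrite finite_setU; split; [exact: fF2 | exact: finite_set1] | exact: fG2].
have Ny : (cyl (F2 `|` [set sg]) G2 `&` X) y.
  split => //; move/cylP: cy => [c1 c2]; apply/cylP; split => // a [/c1 //|->] //.
have [y2 [[/cylP [c1 c2] Xy2] [my2 _]]] := By _ pN Ny.
have y2sg : y2 sg by apply: c1; right.
have fy2 := Xfil Xy2.
have cT : cyl F F' (Tr sg la y2).
  apply: cont => //; apply/cylP; split => // a Fa; apply: c1; by left.
have fT2 := Tr_filter HG fy2 y2sg hs'.
have [T2la _ _ _] := Tr_arrow HG fy2 y2sg hs'.
have XT2 : X (Tr sg la y2) by apply: (X_FA Fla fT2).
exists (Tr sg la y2); split.
  by apply: subU.
by split => //; apply: max_Tr.
Qed.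

Lemma G_pre_open (U : set (set Lam)) (b : bool) : PO U ->
  OG [set g | G g /\ U (if b then g.1.1 else g.2)].
Proof.
move=> pU; split; first by move=> g [].
move=> g [Gg Ug].
have [Xx Xy _] := G_elim HG Gg.
have [p [q gg]] : exists p q, gb p q (if b then U else X) (if b then X else U) g.
  by apply: G_gb => //; case: b Ug.
exists p, q, (if b then U else X), (if b then X else U); split.
- have [_ _ _ _ [_ [l [l' [dl dl' _]]]]] := gb_elim HG gg.
  by split; [rewrite -dl | rewrite -dl']; apply: (dP HG).
- by case: b {Ug gg}; [| apply: popenT].
- by case: b {Ug gg}; [apply: popenT |].
- done.
move=> k kk; split; first by case: kk.
by case: b {Ug gg} kk => -[].
Qed.

Lemma BG_closed g : G g -> ~ BG g -> exists W, [/\ OG W, W g & W `&` BG = set0].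
Proof.
move=> Gg nB; have [Xx Xy _] := G_elim HG Gg.
case: (pselect (BX g.1.1)) => bx.
  case: (pselect (BX g.2)) => [bxy|ny]; first by exfalso; apply: nB; split.
  have [U [pU Uy dis]] := BX_closed Xy ny.
  exists [set g | G g /\ U (if false then g.1.1 else g.2)]; split.
  - exact: (G_pre_open false pU).
  - exact: (conj Gg Uy).
  apply/seteqP; split => // k [[_ Uk] [_ _ Bk]].
  have : (U `&` BX) k.2 by []. by rewrite dis.
have [U [pU Ux dis]] := BX_closed Xx bx.
exists [set g | G g /\ U (if true then g.1.1 else g.2)]; split.
- exact: (G_pre_open true pU).
- exact: (conj Gg Ux).
apply/seteqP; split => // k [[_ Uk] [_ Bk _]].
have : (U `&` BX) k.1.1 by []. by rewrite dis.
Qed.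

End Bd.


Section Part2.
Variables (Q : groupType) (P : set Q) (C : category) (d : mor C -> Q).
Hypothesis HG : is_Pgraph P d.
Local Notation Lam := (mor C).
Local Notation X := (@path_space C).
Local Notation PO := (@path_opens C).
Local Notation BX := (@bpath_space C).
Local Notation BPO := (@bpath_opens C).
Local Notation G := (path_groupoid P d).
Local Notation OG := (groupoid_opens P d).
Local Notation BG := (bpath_groupoid P d).
Local Notation BOG := (bgroupoid_opens P d).
Local Notation gb := (gbasic P d).
Local Notation gs := (@gsrc Q C).
Local Open Scope group_scope.
Implicit Types (a b c k r l m n nu mu la sg : Lam) (x y w F : set Lam) (U V : set (set Lam)).
Implicit Types (g h : (set Lam * Q * set Lam)) (W : set (set Lam * Q * set Lam)).

Lemma BG_G : BG `<=` G. Proof. by move=> g []. Qed.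

Lemma BX_cob : compact_open_basis BX BPO.
Proof.
move=> _ x [U [pU ->]] [Ux Bx].
have [K [pK cK Kx KU]] := X_cob HG pU Ux.
exists (K `&` BX); split.
- by exists K.
- exact: (closed_compact (@BX_X C) cK (fun t Xt nb => BX_closed Xt nb)).
- by split.
- by move=> z [/KU Uz Bz].
Qed.

Lemma BPO_T : BPO BX.
Proof. exists X; split; [exact: popenT | by rewrite setIidr //; apply: BX_X]. Qed.

Lemma BX_lc : locally_compact BX BPO.
Proof.
move=> x Bx; have [K [pK cK Kx _]] := BX_cob BPO_T Bx.
by exists K, K; split.
Qed.

Lemma BX_haus : is_hausdorff BX BPO.
Proof. exact: (sub_hausdorff (@X_hausdorff C) (@BX_X C)). Qed.

Lemma BG_top : topological_groupoid BG BOG gs (@grng Q C) (@gmul Q C) (@ginv Q C).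
Proof.
split.
  split.
    move=> g [Gg Bx By]; split => //; exact: (G_inv HG).
  move=> _ [V [OV ->]].
  have OV' := (inv_cont HG).2 V OV.
  exists (G `&` (@ginv Q C) @^-1` V); split => //.
  apply/seteqP; split.
    by move=> g [Bg [Vg _]]; split => //; split => //; apply: BG_G.
  move=> g [[Gg Vg] Bg]; split => //; split => //.
  by case: Bg => _ b1 b2; split => //; exact: (G_inv HG).
move=> g h Bg Bh e _ [W [OW ->]] [Wgh _].
have [Gg _ _] := Bg; have [Gh _ _] := Bh.
have [W1 [W2 [O1 O2 W1g W2h H]]] := mul_cont HG Gg Gh e OW Wgh.
exists (W1 `&` BG), (W2 `&` BG); split.
- by exists W1.
- by exists W2.
- by split.
- by split.
move=> g' h' [W1g' _] [W2h' _] [Gg' Bx' _] [Gh' _ By'] e'.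
have Wm := H g' h' W1g' W2h' Gg' Gh' e'.
split => //; split => //; by case: OW => /(_ _ Wm).
Qed.

Section WB.
Variables (la sg : Lam).
Hypotheses (Fla : FA la) (hs : src la = src sg).

Lemma img_bd (O : set (set Lam * Q * set Lam)) :
  gs @` ((O `&` Wb P d la sg) `&` BG) = gs @` (O `&` Wb P d la sg) `&` BX.
Proof.
apply/seteqP; split.
  by move=> _ [g [[Og Wg] [_ _ By]] <-]; split => //; exists g.
move=> _ [[g [Og Wg] <-] By]; exists g => //; split => //.
have [Xx Xy _ A] := W_elim HG Wg.
split => //; first by case: Wg.
exact: (BX_inv HG Fla A Xx By).
Qed.

End WB.

Lemma BG_lc : locally_compact BG BOG.
Proof.
move=> g [Gg Bx By]; have [la [sg [Fla Fsg A e]]] := G_FA HG Gg.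
have [Xx Xy _] := G_elim HG Gg.
have [_ _ hs _] := A.
have Wg := W_intro HG Xx Xy A e.
exists (Wb P d la sg `&` BG), (Wb P d la sg `&` BG); split => //.
- by exists (Wb P d la sg); split => //; apply: W_open.
- exact: (closed_compact BG_G (W_compact HG Fla hs Fsg) (fun t Gt nb => BG_closed HG Gt nb)).
Qed.

Lemma BG_lh : local_homeo BG BOG BX BPO gs.
Proof.
split; first by move=> g [].
move=> g [Gg Bx By]; have [la [sg [Fla Fsg A e]]] := G_FA HG Gg.
have [Xx Xy _] := G_elim HG Gg.
have [_ _ hs _] := A.
have Wg := W_intro HG Xx Xy A e.
set W0 := Wb P d la sg.
have OW0 : OG W0 by apply: W_open.
exists (W0 `&` BG); split.
- by exists W0.
- by split.
- exists (gs @` (W0 `&` W0)); split; first exact: (W_openmap HG Fla hs OW0).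
  by rewrite -img_bd // setIid.
- by move=> g1 g2 [W1 _] [W2 _] e'; apply: (W_inj HG hs W1 W2 e').
split.
  move=> _ [V0 [OV0 ->]] sub.
  have -> : V0 `&` BG = (V0 `&` W0) `&` BG.
    apply/seteqP; split; last by move=> k [[? _] ?].
    by move=> k [V0k Bk]; have [W0k _] := sub k (conj V0k Bk).
  rewrite img_bd //; exists (gs @` (V0 `&` W0)); split => //.
  exact: (W_openmap HG Fla hs OV0).
move=> _ [V1 [pV1 ->]].
exists (W0 `&` gs @^-1` V1); split; first exact: (W_cont HG la sg pV1).
apply/seteqP; split.
  by move=> k [[W0k Bk] [V1k _]]; split => //; split.
by move=> k [[W0k V1k] Bk]; split => //; split => //; case: Bk.
Qed.

Lemma BG_ample : ample BG BOG BX BPO gs (@grng Q C) (@gmul Q C) (@ginv Q C).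
Proof.
split; last exact: BX_cob.
split; [exact: BG_top | exact: BG_lc | exact: BX_lc | exact: BX_haus | exact: BG_lh].
Qed.

Lemma BG_sc : second_countable BG BOG.
Proof. exact: (@sub_sc _ G OG BG (G_sc HG)). Qed.

Lemma BG_haus : is_hausdorff BG BOG.
Proof. exact: (sub_hausdorff (G_hausdorff HG) BG_G). Qed.

End Part2.

Unset Implicit Arguments.

Theorem theorem5p18 (Q : groupType) (P : set Q) (C : category) (d : mor C -> Q) :
  wqlo P -> is_Pgraph P d -> @FA C !=set0 ->
  (ample (path_groupoid P d) (groupoid_opens P d)
         (@path_space C) (@path_opens C) (@gsrc Q C) (@grng Q C) (@gmul Q C) (@ginv Q C)
   /\ second_countable (path_groupoid P d) (groupoid_opens P d)
   /\ is_hausdorff (path_groupoid P d) (groupoid_opens P d))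
  /\
  (ample (bpath_groupoid P d) (bgroupoid_opens P d)
         (@bpath_space C) (@bpath_opens C) (@gsrc Q C) (@grng Q C) (@gmul Q C) (@ginv Q C)
   /\ second_countable (bpath_groupoid P d) (bgroupoid_opens P d)
   /\ is_hausdorff (bpath_groupoid P d) (bgroupoid_opens P d)).
Proof.
move=> _ HG _.
split; split; [exact: (G_ample HG) | split; [exact: (G_sc HG) | exact: (G_hausdorff HG)]
  | exact: (BG_ample HG) | split; [exact: (BG_sc HG) | exact: (BG_haus HG)]].
Qed.
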